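(* Let $k\ge 1$. A graph $F$ has a path decomposition of width at most $k$ if and only if $F$ has a $k$-simplicial walk that is decomposing in $F$.
   Context: Graphs are finite and undirected. A path decomposition of $F$ is a path $P$ with bags $\beta(t)\subseteq V(F)$, $t\in V(P)$, such that every edge of $F$ is contained in some bag and for every $v\in V(F)$ the set of nodes whose bags contain $v$ induces a nonempty connected subpath; its width is $\max_t|\beta(t)|-1$. A $k$-simplicial walk of length $t$ in $F$ is a sequence $(\sigma_1,\dots,\sigma_t)$ of nonempty subsets of $V(F)$ of size at most $k+1$ with $|\sigma_1|=1$ such that for each $i\in[t-1]$ there is a vertex $u$ with $\sigma_{i+1}=\sigma_i\sqcup\{u\}$ ($u$ is incoming at step $i+1$) or $\sigma_i=\sigma_{i+1}\sqcup\{u\}$ ($u$ is outgoing); the vertex of $\sigma_1$ counts as incoming at step 1. It is decomposing in $F$ if (D1) every vertex of $F$ is incoming exactly once, and (D2) every edge $uv\in E(F)$ is contained in at least one $\sigma_i$. *)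

(* Defs.v *)
(* A finite simple graph F is a finType T of vertices with a
   symmetric irreflexive edge relation e : rel T. *)
From mathcomp Require Import all_boot.
Set Implicit Arguments. Unset Strict Implicit. Unset Printing Implicit Defensive.

Section Defs.
Variable T : finType.

(* A path decomposition is given by the nonempty sequence of bags along the
   path P = t_0 - t_1 - ... - t_{n-1}. *)
Definition is_path_decomposition (e : rel T) (bags : seq {set T}) : Prop :=
  [/\ 0 < size bags,
      (forall u v, e u v -> exists2 i, i < size bags &
          (u \in nth set0 bags i) && (v \in nth set0 bags i)),
      (forall v, exists2 i, i < size bags & v \in nth set0 bags i) &
      (forall v i j l, i <= j -> j <= l -> l < size bags ->
          v \in nth set0 bags i -> v \in nth set0 bags l ->
          v \in nth set0 bags j)].

(* width = max |bag| - 1 *)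
Definition pd_width_le (bags : seq {set T}) (k : nat) : Prop :=
  forall i, i < size bags -> #|nth set0 bags i| <= k.+1.

Definition has_pd_width_le (e : rel T) (k : nat) : Prop :=
  exists bags, is_path_decomposition e bags /\ pd_width_le bags k.

(* k-simplicial walk (sigma_1, ..., sigma_t), stored 0-indexed. *)
Definition is_simplicial_walk (k : nat) (s : seq {set T}) : Prop :=
  [/\ 0 < size s,
      (forall i, i < size s -> nth set0 s i != set0 /\ #|nth set0 s i| <= k.+1),
      #|nth set0 s 0| = 1 &
      (forall i, i.+1 < size s -> exists u,
          (u \notin nth set0 s i /\ nth set0 s i.+1 = u |: nth set0 s i) \/
          (u \notin nth set0 s i.+1 /\ nth set0 s i = u |: nth set0 s i.+1))].

Definition incoming (s : seq {set T}) (i : nat) (u : T) : bool :=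
  if i is i'.+1 then (u \in nth set0 s i) && (u \notin nth set0 s i')
  else u \in nth set0 s 0.

Definition is_decomposing (e : rel T) (s : seq {set T}) : Prop :=
  (forall v, #|[set i : 'I_(size s) | incoming s i v]| = 1) /\
  (forall u v, e u v -> exists2 i, i < size s &
      (u \in nth set0 s i) && (v \in nth set0 s i)).

End Defs.

(* Main.v *)
Require Import Defs.
From mathcomp Require Import all_boot.
Set Implicit Arguments. Unset Strict Implicit. Unset Printing Implicit Defensive.

Section Inc.
Variable T : finType.
Implicit Types (s : seq {set T}) (v : T).

Lemma incoming_in s i v : incoming s i v -> v \in nth set0 s i.
Proof. by case: i => [|i] //= /andP[]. Qed.

Lemma first_incoming s v i : v \in nth set0 s i -> exists2 m, m <= i & incoming s m v.
Proof.
elim: i => [|i IH] H; first by exists 0.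
case Hi: (v \in nth set0 s i).
  by case: (IH Hi) => m Hm Hinc; exists m => //; apply: leqW.
by exists i.+1 => //=; rewrite H Hi.
Qed.

Lemma later_incoming s v j l : j < l -> v \notin nth set0 s j -> v \in nth set0 s l ->
  exists2 m, j < m <= l & incoming s m v.
Proof.
elim: l => [|l IH] // Hjl Hj Hl.
case Hi: (v \in nth set0 s l).
  have Hjl' : j < l.
    by rewrite ltnS leq_eqVlt in Hjl; case/orP: Hjl => // /eqP E; rewrite E Hi in Hj.
  by case: (IH Hjl' Hj Hi) => m /andP[H1 H2] Hinc; exists m => //; rewrite H1 leqW.
by exists l.+1; rewrite ?Hjl ?leqnn //= Hl Hi.
Qed.

Lemma card_incoming1 s v :
  (exists2 i, i < size s & v \in nth set0 s i) ->
  (forall i j, i < size s -> j < size s -> incoming s i v -> incoming s j v -> i = j) ->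
  #|[set i : 'I_(size s) | incoming s i v]| = 1.
Proof.
case=> i Hi Hv Huniq.
case: (first_incoming Hv) => m Hm Hinc.
have Hms : m < size s by apply: leq_ltn_trans Hi.
rewrite (_ : [set i : 'I_(size s) | incoming s i v] = [set Ordinal Hms]) ?cards1 //.
apply/setP => x; rewrite !inE; apply/idP/eqP => [Hx|->] //.
by apply: val_inj => /=; apply: Huniq.
Qed.

Lemma incoming_uniq s v :
  #|[set i : 'I_(size s) | incoming s i v]| = 1 ->
  forall i j, i < size s -> j < size s -> incoming s i v -> incoming s j v -> i = j.
Proof.
move=> Hc i j Hi Hj Hii Hjj.
have /card_le1_eqP H : #|[set i : 'I_(size s) | incoming s i v]| <= 1 by rewrite Hc.
have := H (Ordinal Hi) (Ordinal Hj); rewrite !inE => /(_ Hii Hjj).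
by move=> E; have := congr1 val E.
Qed.

Lemma incoming_exists s v :
  #|[set i : 'I_(size s) | incoming s i v]| = 1 ->
  exists2 i, i < size s & v \in nth set0 s i.
Proof.
move=> Hc; have : 0 < #|[set i : 'I_(size s) | incoming s i v]| by rewrite Hc.
case/card_gt0P => x; rewrite inE => Hx.
by exists x => //; apply: incoming_in.
Qed.

Lemma walk_to_pd (e : rel T) k s :
  is_simplicial_walk k s -> is_decomposing e s -> has_pd_width_le e k.
Proof.
case=> Hs Hsz _ _ [Hinc Hedge].
exists s; split; last by move=> i /Hsz [].
split => //.
- by move=> v; apply: incoming_exists.
move=> v i j l Hij Hjl Hl Hvi Hvl.
apply/negPn/negP => Hvj.
have Hjl' : j < l by rewrite ltn_neqAle Hjl andbT; apply/eqP => E; rewrite E Hvl in Hvj.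
case: (later_incoming Hjl' Hvj Hvl) => m /andP[Hm1 Hm2] Hm.
case: (first_incoming Hvi) => m' Hm' Hm'i.
have := incoming_uniq (Hinc v) (leq_ltn_trans Hm2 Hl) (leq_ltn_trans Hm' (leq_ltn_trans Hij (leq_ltn_trans Hjl Hl))) Hm Hm'i.
move=> E; move: Hm1; rewrite E => H.
have : m' < m' by apply: leq_ltn_trans H; apply: leq_trans Hm' Hij.
by rewrite ltnn.
Qed.
End Inc.

Section Fwd.
Variables (T : finType) (e : rel T) (k : nat) (bags : seq {set T}) (x0 : T).
Hypothesis hk : 1 <= k.
Hypothesis Hpd : is_path_decomposition e bags.
Hypothesis Hw : pd_width_le bags k.

Definition bag i := nth set0 bags i.
Definition a (u : T) := find (fun B : {set T} => u \in B) bags.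

Lemma has_u u : has (fun B : {set T} => u \in B) bags.
Proof.
case: Hpd => _ _ Hv _; case: (Hv u) => i Hi Hu.
by apply/hasP; exists (nth set0 bags i) => //; apply: mem_nth.
Qed.

Lemma a_lt u : a u < size bags.
Proof. by rewrite /a -has_find has_u. Qed.

Lemma in_bag_a u : u \in bag (a u).
Proof. exact: (nth_find set0 (has_u u)). Qed.

Lemma a_min u i : u \in bag i -> a u <= i.
Proof.
move=> H; rewrite leqNgt; apply/negP => Hlt.
by have := before_find set0 Hlt; rewrite -/(bag i) H.
Qed.

Lemma in_bag_mid u j l : a u <= j -> j <= l -> l < size bags -> u \in bag l -> u \in bag j.
Proof.
case: Hpd => _ _ _ Hint => H1 H2 H3 H4.
exact: (Hint u (a u) j l H1 H2 H3 (in_bag_a u) H4).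
Qed.

Definition leA := fun u v : T => a u <= a v.
Definition vs := sort leA (enum T).
Definition n := size vs.
Definition vv j := nth x0 vs j.

Lemma vs_uniq : uniq vs.
Proof. by rewrite sort_uniq enum_uniq. Qed.

Lemma mem_vs u : u \in vs.
Proof. by rewrite mem_sort mem_enum. Qed.

Lemma idx_lt u : index u vs < n.
Proof. by rewrite index_mem mem_vs. Qed.

Lemma vv_idx u : vv (index u vs) = u.
Proof. by rewrite /vv nth_index ?mem_vs. Qed.

Lemma idx_vv j : j < n -> index (vv j) vs = j.
Proof. by move=> Hj; rewrite /vv index_uniq ?vs_uniq. Qed.

Lemma vs_mono i j : i <= j -> j < n -> a (vv i) <= a (vv j).
Proof.
move=> Hij Hj.
have Hs : sorted leA vs by apply: sort_sorted => u v; apply: leq_total.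
apply: (@sorted_leq_nth _ leA) => //.
- by move=> y x z; apply: leq_trans.
- by move=> x; apply: leqnn.
- by rewrite inE (leq_ltn_trans Hij Hj).
Qed.

Definition B j := bag (a (vv j)).
Definition S j := [set u | (index u vs < j) && (u \in B j)].
Definition D j := if S j == set0 then [set vv j.-1] else S j.
Definition C j := if j is j'.+1 then vv j |: D j else [set vv 0].

Lemma n_gt0 : 0 < n.
Proof. by rewrite /n size_sort -cardE; apply/card_gt0P; exists x0. Qed.

Lemma C_idx j u : j < n -> u \in C j -> index u vs <= j.
Proof.
case: j => [|j] Hj /=.
  by rewrite inE => /eqP ->; rewrite idx_vv.
rewrite in_setU1 => /orP[/eqP ->|]; first by rewrite idx_vv.
rewrite /D; case: ifP => _.
  by rewrite inE => /eqP ->; rewrite idx_vv ?leqnSn // ltnW.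
by rewrite inE => /andP[/ltnW].
Qed.

Lemma vvC j : vv j \in C j.
Proof. by case: j => [|j] /=; rewrite ?inE ?eqxx. Qed.

Lemma C_ne j : C j != set0.
Proof. by apply/set0Pn; exists (vv j); apply: vvC. Qed.

Lemma D_ne j : D j != set0.
Proof. rewrite /D; case: ifP => [_|/negbT //]; by apply/set0Pn; exists (vv j.-1); rewrite inE. Qed.

Lemma C_card j : j < n -> #|C j| <= k.+1.
Proof.
case: j => [|j] Hj /=; first by rewrite cards1.
rewrite /D; case: ifP => _.
  by rewrite cardsU1 cards1; case: (_ \notin _) => //; apply: leq_trans hk.
apply: leq_trans (Hw (a_lt _)).
apply: subset_leq_card; apply/subsetP => u; rewrite in_setU1 => /orP[/eqP ->|].
  exact: in_bag_a.
by rewrite inE => /andP[].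
Qed.

Lemma D_sub j : j.+1 < n -> D j.+1 \subset C j.
Proof.
move=> Hj; rewrite /D; case: ifP => _; first by rewrite sub1set vvC.
apply/subsetP => u; rewrite inE => /andP[Hu1 Hu2].
rewrite ltnS leq_eqVlt in Hu1; case/orP: Hu1 => [/eqP Hu|Hu].
  by have := vvC j; rewrite -Hu vv_idx.
case: j Hj Hu Hu2 => [//|j] Hj Hu Hu2 /=.
have HuS : u \in S j.+1.
  rewrite inE Hu /=.
  apply: (in_bag_mid (l := a (vv j.+2))).
  - by have := vs_mono (ltnW Hu) (ltnW Hj); rewrite vv_idx.
  - exact: vs_mono.
  - exact: a_lt.
  - exact: Hu2.
rewrite /D; have -> : (S j.+1 == set0) = false.
  by apply/negbTE/set0Pn; exists u.
by rewrite in_setU1 HuS orbT.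
Qed.

Lemma notin_C j : j.+1 < n -> vv j.+1 \notin C j.
Proof.
move=> Hj; apply/negP => /(C_idx (ltnW Hj)); by rewrite idx_vv // ltnn.
Qed.

Definition R (p q : nat * {set T}) : bool :=
  ((q.1 == p.1) && [exists u, (u \in p.2) && (q.2 == p.2 :\ u)]) ||
  [&& q.1 == p.1.+1, p.1.+1 < n, vv p.1.+1 \notin p.2 & q.2 == vv p.1.+1 |: p.2].

Definition Good (A : {set T}) := (A != set0) && (#|A| <= k.+1).

Definition rems (X : {set T}) (r : seq T) := scanl (fun A x => A :\ x) X r.

Lemma rems_path j (X : {set T}) (r : seq T) : uniq r -> {subset r <= X} ->
  [/\ path R (j, X) [seq (j, A) | A <- rems X r],
      last (j, X) [seq (j, A) | A <- rems X r] = (j, X :\: [set x in r]) &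
      all (fun p : nat * {set T} => (X :\: [set x in r] \subset p.2) && (p.2 \subset X))
          [seq (j, A) | A <- rems X r]].
Proof.
elim: r X => [|x r IH] X /=.
  move=> _ _; split => //; congr (_, _); apply/setP => y; by rewrite !inE.
case/andP => Hx Hu Hsub.
have Hsub' : {subset r <= X :\ x}.
  move=> y Hy; rewrite !inE Hsub ?inE ?Hy ?orbT // andbT.
  by apply/eqP => E; move: Hx; rewrite -E Hy.
case: (IH _ Hu Hsub') => H1 H2 H3.
have E : (X :\ x) :\: [set y in r] = X :\: [set y in x :: r].
  by apply/setP => y; rewrite !inE negb_or andbA [(y \notin r) && _]andbC.
rewrite E in H2 H3; split => //.
- rewrite H1 andbT /R /= eqxx /=; apply/orP; left.
  by apply/existsP; exists x; rewrite eqxx andbT Hsub // inE eqxx.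
- rewrite /=; apply/andP; split.
    by apply/andP; split; [rewrite -E subsetDl | apply: subD1set].
  move: H3; apply: sub_all => p /andP[H H'].
  by rewrite H (subset_trans H' (subD1set _ _)).
Qed.

Definition seg j : seq (nat * {set T}) :=
  [seq (j, A) | A <- rems (C j) (enum (C j :\: D j.+1))] ++ [:: (j.+1, C j.+1)].

Lemma seg_ok j : j.+1 < n ->
  [/\ path R (j, C j) (seg j), all (fun p : nat * {set T} => Good p.2) (seg j) &
      last (j, C j) (seg j) = (j.+1, C j.+1)].
Proof.
move=> Hj.
have Hsub := D_sub Hj.
case: (@rems_path j (C j) (enum (C j :\: D j.+1))).
- exact: enum_uniq.
- by move=> y; rewrite mem_enum inE => /andP[].
move=> H1 H2 H3.
have E : C j :\: [set x in enum (C j :\: D j.+1)] = D j.+1.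
  apply/setP => y; rewrite !inE mem_enum !inE negb_and negbK.
  case Hy: (y \in D j.+1); last by case: (y \in C j).
  by rewrite /= (subsetP Hsub).
rewrite E in H2 H3.
rewrite /seg last_cat /=; split => //.
- rewrite cat_path H1 /= H2 andbT /R /= eqxx /=; apply/orP; right.
  rewrite Hj eqxx /= andbT; apply/negP => H.
  by have := notin_C Hj; rewrite (subsetP Hsub _ H).
- rewrite all_cat /= andbT; apply/andP; split.
    move: H3; apply: sub_all => p /andP[Hl Hu].
    rewrite /Good; apply/andP; split.
      apply/set0Pn; case/set0Pn: (D_ne j.+1) => y Hy; exists y.
      exact: (subsetP Hl).
    by apply: leq_trans (subset_leq_card Hu) (C_card (ltnW Hj)).
  by apply/andP; split; [exact: (C_ne j.+1) | exact: (C_card Hj)].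
Qed.

Fixpoint build j m : seq (nat * {set T}) :=
  if m is m'.+1 then seg j ++ build j.+1 m' else [::].

Lemma build_ok j m : j + m < n ->
  path R (j, C j) (build j m) && all (fun p : nat * {set T} => Good p.2) (build j m).
Proof.
elim: m j => [|m IH] j //= Hjm.
have Hj : j.+1 < n by apply: leq_ltn_trans Hjm; rewrite addnS ltnS leq_addr.
case: (seg_ok Hj) => H1 H2 H3.
have Hm : j.+1 + m < n by rewrite addSn -addnS.
have /andP[H4 H5] := IH j.+1 Hm.
by rewrite cat_path H1 H3 H4 all_cat H2 H5.
Qed.

Lemma build_mem j m i : j <= i <= j + m -> (i, C i) \in (j, C j) :: build j m.
Proof.
elim: m j => [|m IH] j /=.
  by rewrite addn0 -eqn_leq => /eqP ->; rewrite inE eqxx.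
rewrite leq_eqVlt => /andP[/orP[/eqP ->|Hji] Him]; first by rewrite inE eqxx.
have := IH j.+1; rewrite Hji addSn -addnS Him => /(_ isT) H.
rewrite in_cons mem_cat; apply/orP; right; apply/orP.
move: H; rewrite in_cons => /orP[/eqP E|H]; last by right.
by left; rewrite E /seg mem_cat mem_seq1 eqxx orbT.
Qed.

Hypothesis e_sym : symmetric e.
Hypothesis e_irr : irreflexive e.

Definition p0 : nat * {set T} := (0, set0).
Definition w := (0, C 0) :: build 0 n.-1.
Definition s := map snd w.
Definition st i := (nth p0 w i).1.

Lemma w_ok : path R (0, C 0) (build 0 n.-1) &&
  all (fun p : nat * {set T} => Good p.2) (build 0 n.-1).
Proof. by apply: build_ok; rewrite add0n ltn_predL n_gt0. Qed.

Lemma stepR i : i.+1 < size w -> R (nth p0 w i) (nth p0 w i.+1).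
Proof.
move=> Hi; case/andP: w_ok => /(pathP p0) H _.
exact: H.
Qed.

Lemma nth_s i : i < size w -> nth set0 s i = (nth p0 w i).2.
Proof. by move=> Hi; rewrite /s (nth_map p0). Qed.

Lemma st_mono i j : i <= j -> j < size w -> st i <= st j.
Proof.
elim: j => [|j IH] Hij Hj; first by move: Hij; rewrite leqn0 => /eqP ->.
move: Hij; rewrite leq_eqVlt => /orP[/eqP ->|Hij] //.
apply: leq_trans (IH Hij (ltnW Hj)) _.
case/orP: (stepR Hj) => [/andP[/eqP E _]|/and4P[/eqP E _ _ _]]; by rewrite /st E.
Qed.

Lemma inc_st i v : i < size w -> incoming s i v ->
  st i = index v vs /\ (0 < i -> (st i.-1).+1 = st i).
Proof.
case: i => [|i] Hi; rewrite /incoming (nth_s Hi).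
  by rewrite /= inE => /eqP ->; rewrite idx_vv ?n_gt0.
rewrite (nth_s (ltnW Hi)) => /andP[Hv Hnv].
case/orP: (stepR Hi) => [/andP[_ /existsP[u /andP[_ /eqP E]]]|/and4P[/eqP E1 Hlt _ /eqP E2]].
  by move: Hv; rewrite E !inE (negbTE Hnv) andbF.
move: Hv; rewrite E2 in_setU1 (negbTE Hnv) orbF => /eqP Ev.
by rewrite /st E1 Ev idx_vv.
Qed.

Lemma in_walk j X : (j, X) \in w -> exists2 i, i < size s & nth set0 s i = X.
Proof.
move=> H; exists (index (j, X) w); first by rewrite size_map index_mem.
by rewrite nth_s ?index_mem // nth_index.
Qed.

Lemma C_in_walk j : j < n -> exists2 i, i < size s & nth set0 s i = C j.
Proof.
move=> Hj; apply: (in_walk (j := j)); rewrite /w; apply: build_mem.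
by rewrite add0n /= -ltnS prednK ?n_gt0.
Qed.

Lemma edge_cov u v : e u v -> index u vs < index v vs ->
  exists2 i, i < size s & (u \in nth set0 s i) && (v \in nth set0 s i).
Proof.
move=> Huv Hlt.
have HuS : u \in S (index v vs).
  rewrite inE Hlt /= /B vv_idx.
  case: Hpd => _ Hed _ _; case: (Hed u v Huv) => t Ht /andP[Hut Hvt].
  apply: (in_bag_mid (l := t)) => //; last exact: a_min.
  by have := vs_mono (ltnW Hlt) (idx_lt v); rewrite !vv_idx.
have HC : (u \in C (index v vs)) && (v \in C (index v vs)).
  have := vvC (index v vs); rewrite vv_idx.
  move: HuS Hlt; case: (index v vs) => [|j] // HuS _ /=.
  rewrite /D; have -> : (S j.+1 == set0) = false by apply/negbTE/set0Pn; exists u.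
  by rewrite !in_setU1 HuS orbT => ->.
case: (C_in_walk (idx_lt v)) => i Hi E; exists i => //; by rewrite E.
Qed.

Lemma pd_to_walk : exists s, is_simplicial_walk k s /\ is_decomposing e s.
Proof.
have Hsz : size s = size w by rewrite size_map.
case/andP: w_ok => Hpath Hall.
exists s; split; [split|split].
- by rewrite Hsz.
- move=> i Hi; rewrite nth_s -?Hsz //.
  case: i Hi => [|i] Hi /=.
    by split; [exact: (C_ne 0) | rewrite cards1].
  have := all_nthP p0 Hall i; rewrite Hsz /w /= ltnS in Hi.
  by move=> /(_ Hi) /andP[H1 H2]; split.
- by rewrite /= cards1.
- move=> i Hi; rewrite Hsz in Hi.
  rewrite !nth_s ?(ltnW Hi) //.
  case/orP: (stepR Hi) => [/andP[_ /existsP[u /andP[Hu /eqP E]]]|/and4P[_ _ Hn /eqP E]].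
    by exists u; right; rewrite E setD1K // !inE eqxx.
  by exists (vv (nth p0 w i).1.+1); left.
- move=> v; apply: card_incoming1.
    case: (C_in_walk (idx_lt v)) => i Hi E; exists i => //.
    by rewrite E -{1}(vv_idx v) vvC.
  have key : forall i j, i < j -> j < size s -> incoming s i v -> incoming s j v -> False.
    move=> i j Hij Hj Hii Hjj; rewrite Hsz in Hj.
    case: (inc_st (ltn_trans Hij Hj) Hii) => Ei _.
    case: (inc_st Hj Hjj) => Ej /(_ (leq_ltn_trans (leq0n _) Hij)) Ej'.
    have Hle : i <= j.-1 by rewrite -ltnS prednK // (leq_ltn_trans (leq0n _) Hij).
    have := st_mono Hle (leq_ltn_trans (leq_pred _) Hj).
    by rewrite Ei -Ej -Ej' ltnn.
  move=> i j Hi Hj Hii Hjj; case: (ltngtP i j) => // H.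
    by case: (key i j H Hj Hii Hjj).
  by case: (key j i H Hi Hjj Hii).
- move=> u v Huv.
  case: (ltngtP (index u vs) (index v vs)) => H.
  + exact: edge_cov.
  + have Hvu : e v u by rewrite e_sym.
    case: (edge_cov Hvu H) => i Hi Hb; exists i => //; by rewrite andbC.
  + have Euv : u = v by rewrite -(vv_idx u) H vv_idx.
    by move: Huv; rewrite Euv e_irr.
Qed.
End Fwd.

Theorem proposition4 (T : finType) (e : rel T)
    (e_sym : symmetric e) (e_irr : irreflexive e)
    (T_nonempty : 0 < #|T|) (k : nat) (hk : 1 <= k) :
  has_pd_width_le e k <->
  exists s : seq {set T}, is_simplicial_walk k s /\ is_decomposing e s.
Proof.
split.
- case=> bags [Hpd Hw].
  case/card_gt0P: T_nonempty => x0 _.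
  exact: (pd_to_walk x0 hk Hpd Hw e_sym e_irr).
- by case=> s [Hs Hd]; apply: (walk_to_pd Hs Hd).
Qed.
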